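(* Let $\hat q$ be an $n\times n$ and $\hat p$ an $m\times m$ parametric matrix, let $M$ be an $n\times m$ $(\hat q,\hat p)$-Manin matrix over $\mathfrak R$ and $N$ an $m\times n$ $(\hat p,\hat q)$-Manin matrix over $\mathfrak R$ such that every $N_{ij}$ commutes with every $M_{kl}$. Then $$\mathrm{char}_{\hat q}(MN,t)=t^{n-m}\,\mathrm{char}_{\hat p}(NM,t).$$
   Context: $\mathfrak R$ is an associative unital algebra over $\mathbb C$; $t$ is a central indeterminate. A parametric $n\times n$ matrix is $\hat q=(q_{ij})$ with nonzero complex entries, $q_{ij}q_{ji}=1$, $q_{ii}=1$. For parametric $\hat q$ ($n\times n$) and $\hat p$ ($m\times m$), an $n\times m$ matrix $M$ over $\mathfrak R$ is a $(\hat q,\hat p)$-Manin matrix if $M_{ik}M_{jk}=q_{ji}M_{jk}M_{ik}$ for $i<j$ and all $k$, and $M_{ik}M_{jl}-q_{ji}p_{kl}M_{jl}M_{ik}+p_{kl}M_{il}M_{jk}-q_{ji}M_{jk}M_{il}=0$ for $i<j$, $k<l$. Let $P_{\hat q}=\sum_{i,j}q_{ji}E_{ij}\otimes E_{ji}$; $s_i\mapsto P_{\hat q}^{(i,i+1)}$ defines an action $\sigma\mapsto P_{\hat q}^{\sigma}$ of $S_k$ on $(\mathbb C^n)^{\otimes k}$, and $A_{\hat q}^{(k)}=\frac1{k!}\sum_{\sigma\in S_k}\mathrm{sgn}(\sigma)P_{\hat q}^{\sigma}$. For an $n\times n$ matrix $X$ over $\mathfrak R$, $e_0(X)=1$, $e_k(X)=\mathrm{tr}_{1,\dots,k}A_{\hat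 q}^{(k)}X_1\cdots X_k$ ($X_a$ = $X$ acting on the $a$-th tensor factor, full trace), and $\mathrm{char}_{\hat q}(X,t)=\sum_{k=0}^n(-1)^ke_k(X)t^{n-k}$; $\mathrm{char}_{\hat p}$ of an $m\times m$ matrix is defined likewise with $\hat p$ and $m$. *)

(* Defs.v *)
From HB Require Import structures.
From mathcomp Require Import all_boot all_order all_algebra all_fingroup.
From mathcomp Require Import complex.
From mathcomp Require Import Rstruct.
Set Implicit Arguments. Unset Strict Implicit. Unset Printing Implicit Defensive.
Import Order.TTheory GRing.Theory Num.Theory.
Local Open Scope ring_scope.

Definition CC : fieldType := (Rdefinitions.R)[i].

Definition parametric (n : nat) (q : 'M[CC]_n) : Prop :=
  (forall i j, q i j != 0) /\ (forall i j, q i j * q j i = 1) /\ (forall i, q i i = 1).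

Section ManinDefs.
Variable A : algType CC.

Definition manin (n m : nat) (q : 'M[CC]_n) (p : 'M[CC]_m) (M : 'M[A]_(n, m)) : Prop :=
  (forall (i j : 'I_n) (k : 'I_m), (i < j)%N ->
     M i k * M j k = q j i *: (M j k * M i k)) /\
  (forall (i j : 'I_n) (k l : 'I_m), (i < j)%N -> (k < l)%N ->
     M i k * M j l - (q j i * p k l) *: (M j l * M i k)
     + p k l *: (M i l * M j k) - q j i *: (M j k * M i l) = 0).

(* Operators on (C^n)^{(x) k}, with entries in a ring S, written as
   matrices indexed by the standard basis e_{I_1} (x) ... (x) e_{I_k}. *)
Section Ops.
Variables (n k : nat).
Definition tidx := {ffun 'I_k -> 'I_n}.
Definition op (S : Type) := tidx -> tidx -> S.
Definition op_mul (S : pzRingType) (X Y : op S) : op S :=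
  fun I J => \sum_(K : tidx) X I K * Y K J.
Definition op_id (S : pzRingType) : op S := fun I J => (I == J)%:R.
Definition op_prod (S : pzRingType) (s : seq (op S)) : op S :=
  foldr (@op_mul S) (@op_id S) s.

(* X_a : the n x n matrix X acting on the a-th tensor factor. *)
Definition op_at (X : 'M[A]_n) (a : 'I_k) : op A :=
  fun I J => X (I a) (J a) * \prod_(b : 'I_k | b != a) ((I b == J b)%:R : A).

(* P_q^{(u,v)} = sum_{i,j} q_{ji} (E_{ij})_u (E_{ji})_v  for u <> v. *)
Definition Pq_at (q : 'M[CC]_n) (u v : 'I_k) : op CC :=
  fun I J => \sum_(i : 'I_n) \sum_(j : 'I_n)
    q j i * ((I u == i) && (J u == j) && (I v == j) && (J v == i))%:R
          * \prod_(b : 'I_k | (b != u) && (b != v)) ((I b == J b)%:R : CC).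

(* Letters of words in the generators s_1, ..., s_{k-1}:  the letter
   a : 'I_k with 1 <= a stands for s_a (swapping the 0-indexed positions
   a-1 and a); the letter 0 stands for the identity (padding). *)
Definition letter_perm (a : 'I_k) : 'S_k :=
  if a == 0 :> nat then 1%g else tperm (insubd a a.-1) a.
Definition letter_P (q : 'M[CC]_n) (a : 'I_k) : op CC :=
  if a == 0 :> nat then @op_id CC else Pq_at q (insubd a a.-1) a.

(* The permutation s_{a_1} s_{a_2} ... s_{a_L} (composition of maps,
   s_{a_L} applied first; mathcomp's product is in diagrammatic order). *)
Definition word_perm (w : seq 'I_k) : 'S_k := (\prod_(a <- rev w) letter_perm a)%g.
Definition word_P (q : 'M[CC]_n) (w : seq 'I_k) : op CC :=
  op_prod [seq letter_P q a | a <- w].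

(* P_q^sigma : the image of sigma under the action s_i |-> P_q^{(i,i+1)},
   computed along a word (of length <= k*k, padded with identity letters)
   representing sigma.  Every sigma has such a word. *)
Definition Pq_perm (q : 'M[CC]_n) (s : 'S_k) : op CC :=
  match [pick w : (k * k).-tuple 'I_k | word_perm w == s] with
  | Some w => word_P q w
  | None => fun _ _ => 0
  end.

Definition antisym (q : 'M[CC]_n) : op CC :=
  fun I J => (k`!%:R)^-1 * \sum_(s : 'S_k) (-1) ^+ s * Pq_perm q s I J.

(* e_k(X) = tr_{1..k} A_q^{(k)} X_1 ... X_k  (k >= 1). *)
Definition ek (q : 'M[CC]_n) (X : 'M[A]_n) : A :=
  \sum_(I : tidx) \sum_(J : tidx)
     (antisym q I J)%:A * op_prod [seq op_at X a | a <- enum 'I_k] J I.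
End Ops.

Definition e_q (n : nat) (q : 'M[CC]_n) (k : nat) (X : 'M[A]_n) : A :=
  if k == 0%N then 1 else @ek n k q X.

Definition char_q (n : nat) (q : 'M[CC]_n) (X : 'M[A]_n) : {poly A} :=
  \sum_(k < n.+1) ((-1) ^+ k * e_q q k X)%:P * 'X^(n - k).
End ManinDefs.

(* Main.v *)
Require Import Defs.
From HB Require Import structures.
From mathcomp Require Import all_boot all_order all_algebra all_fingroup.
From mathcomp Require Import complex.
From mathcomp Require Import Rstruct.
From mathcomp Require Import zify ring.
Set Implicit Arguments. Unset Strict Implicit. Unset Printing Implicit Defensive.
Import GRing.Theory.
Local Open Scope ring_scope.


Lemma tperm_val k (u v z : 'I_k) : val (tperm u v z) =
  if val z == val u then val v else if val z == val v then val u else val z.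
Proof.
case: tpermP => [->|->|/eqP h1 /eqP h2]; rewrite ?eqxx //.
  by case: eqP => // /val_inj ->.
by rewrite !val_eqE (negbTE h1) (negbTE h2).
Qed.

Lemma swap_cond k (u v x y : 'I_k) : v = u.+1 :> nat ->
  (tperm u v x < tperm u v y)%N && ((x, y) != (v, u)) =
  (x < y)%N && ((x, y) != (u, v)).
Proof.
move=> Huv; rewrite !xpair_eqE -!val_eqE /= !tperm_val /=.
repeat (case: eqP => ?); apply/idP/idP; lia.
Qed.

Lemma pair_swap (R : Type) (idx : R) (op : Monoid.com_law idx) k
  (F : 'I_k -> 'I_k -> R) (u v : 'I_k) : v = u.+1 :> nat ->
  op (\big[op/idx]_(x : 'I_k) \big[op/idx]_(y : 'I_k | (x < y)%N) F (tperm u v x) (tperm u v y)) (F u v) =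
  op (\big[op/idx]_(x : 'I_k) \big[op/idx]_(y : 'I_k | (x < y)%N) F x y) (F v u).
Proof.
move=> Huv; rewrite !pair_big_dep /=.
have hinj : injective (fun p : 'I_k * 'I_k => (tperm u v p.1, tperm u v p.2)).
  by move=> [a b] [c d] /= [/perm_inj -> /perm_inj ->].
have -> : \big[op/idx]_(p : 'I_k * 'I_k | (p.1 < p.2)%N) F (tperm u v p.1) (tperm u v p.2) =
          \big[op/idx]_(p : 'I_k * 'I_k | (tperm u v p.1 < tperm u v p.2)%N) F p.1 p.2.
  by rewrite [RHS](reindex_inj hinj) /=; apply: eq_bigl => p; rewrite !tpermK.
have uv : (u < v)%N by rewrite Huv.
rewrite (bigD1 (v, u)) /=; last by rewrite tpermR tpermL.
rewrite [in RHS](bigD1 (u, v)) //=.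
rewrite (eq_bigl (fun p : 'I_k * 'I_k => (p.1 < p.2)%N && (p != (u, v)))); last first.
  by move=> [x y]; rewrite /= swap_cond.
set B := \big[op/idx]_(i | _) _.
rewrite [LHS]Monoid.mulmAC [RHS]Monoid.mulmAC; congr (_ _ _); exact: Monoid.mulmC.
Qed.

Definition permt n k (J : tidx n k) (s : 'S_k) : tidx n k := [ffun x => J (s x)].

Lemma permtM n k (J : tidx n k) s t : permt (permt J s) t = permt J (t * s).
Proof. by apply/ffunP => x; rewrite !ffunE permM. Qed.

Lemma permt1 n k (J : tidx n k) : permt J 1 = J.
Proof. by apply/ffunP => x; rewrite !ffunE perm1. Qed.

Definition inv k (s : 'S_k) : nat :=
  \sum_(x : 'I_k) \sum_(y : 'I_k | (x < y)%N) (s y < s x)%N.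

Lemma inv_swap k (s : 'S_k) (u v : 'I_k) : v = u.+1 :> nat ->
  (inv (tperm u v * s) + (s v < s u) = inv s + (s u < s v))%N.
Proof.
move=> Huv; rewrite /inv.
have := pair_swap addn (fun x y : 'I_k => (s y < s x)%N) Huv.
by under eq_bigr do under eq_bigr do rewrite -!permM.
Qed.

Lemma inv_le k (s : 'S_k) : (inv s <= k * k)%N.
Proof.
rewrite /inv; apply: leq_trans (_ : \sum_(x : 'I_k) k <= _)%N.
  apply: leq_sum => x _; apply: leq_trans (_ : \sum_(y : 'I_k) 1 <= _)%N.
    rewrite [X in (_ <= X)%N](bigID (fun y : 'I_k => (x < y)%N)) /=.
    apply: leq_trans (leq_addr _ _); apply: leq_sum => y _; exact: leq_b1.
  by rewrite sum1_card card_ord.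
by rewrite sum_nat_const card_ord.
Qed.

Lemma val_prev k (v : 'I_k) : val (insubd v v.-1 : 'I_k) = v.-1.
Proof. by rewrite val_insubd (leq_ltn_trans (leq_pred _) (ltn_ord v)). Qed.

Lemma nat_prev k (v : 'I_k) : nat_of_ord (insubd v v.-1 : 'I_k) = v.-1.
Proof. exact: val_prev. Qed.

Lemma letter_perm_succ k (u v : 'I_k) : v = u.+1 :> nat -> letter_perm v = tperm u v.
Proof.
move=> Huv; rewrite /letter_perm Huv /=; congr tperm; apply: val_inj.
by rewrite val_insubd /= ltn_ord.
Qed.

Lemma letter_perm0 k (d : 'I_k) : val d = 0%N -> letter_perm d = 1%g.
Proof. by move=> hd; rewrite /letter_perm hd. Qed.

Lemma incr_id k (s : 'S_k) :
  (forall v : 'I_k, (0 < v)%N -> (s (insubd v v.-1) < s v)%N) -> s = 1%g.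
Proof.
move=> hinc; apply/permP => x; apply: val_inj; rewrite perm1 /=; apply/eqP.
rewrite eqn_leq; apply/andP; split.
  have H : forall d (x : 'I_k), (x + d = k.-1)%N -> (s x <= x)%N.
    elim=> [|d IH] y hy.
      by have := ltn_ord (s y); lia.
    have hy1 : (y.+1 < k)%N by lia.
    have := IH (Ordinal hy1) ltac:(rewrite /=; lia).
    have := hinc (Ordinal hy1) isT.
    have -> : (insubd (Ordinal hy1) (Ordinal hy1).-1 : 'I_k) = y.
      by apply: val_inj; rewrite ?val_prev ?nat_prev.
    rewrite /=; lia.
  by apply: (H (k.-1 - x)%N); have := ltn_ord x; lia.
have H : forall d (x : 'I_k), val x = d -> (d <= s x)%N.
  elim=> [|d IH] y hy //.
  have := hinc y ltac:(rewrite hy //).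
  have := IH (insubd y y.-1) ltac:(rewrite ?val_prev ?nat_prev hy //).
  lia.
exact: H.
Qed.

Lemma decomp k (s : 'S_k) :
  exists l : seq 'I_k, size l = inv s /\ s = (\prod_(a <- l) letter_perm a)%g.
Proof.
move: {2}(inv s) (leqnn (inv s)) => N; elim: N s => [|N IH] s hs.
  case: (boolP [exists v : 'I_k, (0 < v)%N && (s v < s (insubd v v.-1))%N]).
    case/existsP=> v /andP [v0 hv].
    set u : 'I_k := insubd v v.-1.
    have Huv : v = u.+1 :> nat by rewrite ?val_prev ?nat_prev; lia.
    have := inv_swap s Huv; rewrite hv ltnNge (ltnW hv) /=; lia.
  rewrite negb_exists => /forallP hn.
  have -> : s = 1%g.
    apply: incr_id => v v0; have := hn v; rewrite v0 /= -leqNgt leq_eqVlt.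
    case/orP=> // /eqP/val_inj/perm_inj/(congr1 val); rewrite ?val_prev ?nat_prev => /= h; lia.
  exists [::]; split; last by rewrite big_nil.
  rewrite /inv big1 // => x _; rewrite big1 // => y hxy; by rewrite !perm1 ltnNge ltnW.
case: (boolP [exists v : 'I_k, (0 < v)%N && (s v < s (insubd v v.-1))%N]).
  case/existsP=> v /andP [v0 hv].
  set u : 'I_k := insubd v v.-1.
  have Huv : v = u.+1 :> nat by rewrite ?val_prev ?nat_prev; lia.
  have := inv_swap s Huv; rewrite hv ltnNge (ltnW hv) /= => hi.
  have [l [hl hsl]] := IH (tperm u v * s)%g ltac:(lia).
  exists (v :: l); split; first by rewrite /= hl; lia.
  by rewrite big_cons -hsl (letter_perm_succ Huv) mulgA tperm2 mul1g.
rewrite negb_exists => /forallP hn.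
have -> : s = 1%g.
  apply: incr_id => v v0; have := hn v; rewrite v0 /= -leqNgt leq_eqVlt.
  case/orP=> // /eqP/val_inj/perm_inj/(congr1 val); rewrite ?val_prev ?nat_prev => /= h; lia.
exists [::]; split; last by rewrite big_nil.
  rewrite /inv big1 // => x _; rewrite big1 // => y hxy; by rewrite !perm1 ltnNge ltnW.
Qed.

Lemma word_exists k (s : 'S_k) : exists w : (k * k).-tuple 'I_k, word_perm w = s.
Proof.
have [l [hl ->]] := decomp s.
have hle := inv_le s; rewrite -hl in hle.
case: k s l hl hle => [|k] s l hl hle.
  by case: l hl hle => // _ _; exists [tuple]; rewrite /word_perm /= !big_nil.
set w := rev l ++ nseq (k.+1 * k.+1 - size l) ord0.
have hw : size w == (k.+1 * k.+1)%N by rewrite size_cat size_rev size_nseq; apply/eqP; lia.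
exists (Tuple hw); rewrite /word_perm /= /w rev_cat revK big_cat /=.
rewrite big1_seq ?mul1g // => a /andP [_]; rewrite rev_nseq mem_nseq => /andP [_ /eqP ->].
exact: letter_perm0.
Qed.


Lemma prod_nat_bool (R : pzSemiRingType) (T : finType) (P B : pred T) :
  \prod_(b | P b) ((B b)%:R : R) = ([forall b, P b ==> B b])%:R.
Proof.
rewrite -natr_prod; congr (_%:R).
case: forallP => [h | h].
  by rewrite big1 // => b Pb; move: (h b); rewrite Pb /= => ->.
have : ~~ [forall b, P b ==> B b] by apply/forallP.
rewrite negb_forall => /existsP [b]; rewrite negb_imply => /andP [Pb /negbTE Bb].
by rewrite (bigD1 b Pb) /= Bb mul0n.
Qed.

Lemma big0 (V : nmodType) (I : Type) (r : seq I) (P : pred I) (F : I -> V) :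
  (forall i, P i -> F i = 0) -> \sum_(i <- r | P i) F i = 0.
Proof. exact: big1. Qed.

Lemma sumD1 (V : nmodType) (I : finType) (j : I) (F : I -> V) :
  \sum_i F i = F j + \sum_(i | i != j) F i.
Proof. exact: bigD1. Qed.

Lemma prod1 (R : pzSemiRingType) (I : Type) (r : seq I) (P : pred I) (F : I -> R) :
  (forall i, P i -> F i = 1) -> \prod_(i <- r | P i) F i = 1.
Proof. exact: big1. Qed.

Lemma ring_aux1 (R : comRingType) (e a x b : R) : e * (a * x * b) = a * b * (e * x).
Proof. ring. Qed.

Lemma antisym_aux (R : comRingType) (I : finType) (c a b : R) (e x : I -> R) :
  c * \sum_i e i * (a * x i * b) = a * b * (c * \sum_i e i * x i).
Proof.
rewrite mulrCA; congr (_ * _); rewrite mulr_sumr; apply: eq_bigr => i _; exact: ring_aux1.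
Qed.

Section PsiSec.
Variables (n k : nat) (q : 'M[CC]_n).
Hypothesis hq : parametric q.

Definition sq (i j : 'I_n) : CC := if (i < j)%N then q i j else 1.
Definition Psi (J : tidx n k) : CC :=
  \prod_(x : 'I_k) \prod_(y : 'I_k | (x < y)%N) sq (J x) (J y).

Lemma sq_neq0 i j : sq i j != 0.
Proof. by rewrite /sq; case: ifP => _; [case: hq => [h _]; apply: h | exact: oner_neq0]. Qed.

Lemma Psi_neq0 J : Psi J != 0.
Proof. by rewrite /Psi; apply/prodf_neq0 => x _; apply/prodf_neq0 => y _; apply: sq_neq0. Qed.

Lemma sq_ratio i j : sq i j = q i j * sq j i.
Proof.
case: hq => [_ [h1 h2]]; rewrite /sq.
case: (ltngtP i j) => [h|h|/val_inj ->]; rewrite ?mulr1 ?h2 ?h1 //.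
Qed.

Lemma Psi_swap (J : tidx n k) (u v : 'I_k) : v = u.+1 :> nat ->
  Psi J = q (J u) (J v) * Psi (permt J (tperm u v)).
Proof.
move=> Huv.
have := pair_swap (idx := 1) *%R (fun x y => sq (J x) (J y)) Huv.
rewrite /= -/(Psi J) => h.
have -> : Psi (permt J (tperm u v)) = \prod_(x : 'I_k) \prod_(y : 'I_k | (x < y)%N) sq (J (tperm u v x)) (J (tperm u v y)).
  by apply: eq_bigr => x _; apply: eq_bigr => y _; rewrite !ffunE.
apply: (mulIf (sq_neq0 (J v) (J u))); rewrite -h sq_ratio; ring.
Qed.

Definition Pf (s : 'S_k) (I J : tidx n k) : CC :=
  (Psi I)^-1 * ((I == permt J s)%:R) * Psi J.

Lemma Pf1 I J : Pf 1 I J = (I == J)%:R.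
Proof.
rewrite /Pf permt1; case: eqP => [->|_]; last by rewrite mulr0 mul0r.
by rewrite mulr1 mulVf // Psi_neq0.
Qed.

Lemma Pf_mul s t I J : \sum_K Pf s I K * Pf t K J = Pf (s * t) I J.
Proof.
rewrite (bigD1 (permt J t)) //=.
have -> : \sum_(K | K != permt J t) Pf s I K * Pf t K J = 0.
  apply: big1 => K /negbTE hK; by rewrite /Pf hK mulr0 mul0r mulr0.
rewrite addr0.
rewrite /Pf eqxx permtM mulr1.
have := Psi_neq0 (permt J t); set a := Psi _ => ha.
by rewrite !mulrA mulfK.
Qed.


Lemma Pq_at_formula (u v : 'I_k) I J : v = u.+1 :> nat ->
  Pq_at q u v I J = Pf (tperm u v) I J.
Proof.
move=> Huv; rewrite /Pq_at /Pf.
case: (boolP (I == permt J (tperm u v))) => [/eqP -> | hne].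
  rewrite mulr1 (Psi_swap J Huv) [RHS]mulrCA mulVf ?Psi_neq0 // mulr1.
  rewrite (bigD1 (permt J (tperm u v) u)) //= [X in _ + X](@big0 CC) ?addr0; last first.
    move=> i hi; rewrite (@big0 CC) // => j _.
    have -> : (permt J (tperm u v) u == i) = false by rewrite eq_sym; apply/negbTE.
    by rewrite /= mulr0 mul0r.
  rewrite (@sumD1 CC _ (J u)) /= [X in _ + X](@big0 CC) ?addr0; last first.
    move=> j hj; have -> : (J u == j) = false by rewrite eq_sym; apply/negbTE.
    by rewrite andbF /= mulr0 mul0r.
  rewrite !ffunE tpermL tpermR !eqxx /= mulr1 (@prod1 CC) ?mulr1 // => b /andP [hbu hbv].
  by rewrite ffunE tpermD 1?eq_sym // eqxx.
rewrite mulr0 mul0r (@big0 CC) // => i _; rewrite (@big0 CC) // => j _.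
case: (boolP ((I u == i) && (J u == j) && (I v == j) && (J v == i))); last first.
  by move=> _; rewrite mulr0 mul0r.
case/andP => [/andP [/andP [/eqP hi /eqP hj] /eqP hi2] /eqP hj2].
rewrite prod_nat_bool; case: forallP => [hall|_]; last by rewrite mulr0.
exfalso; apply: (negP hne); apply/eqP/ffunP => x; rewrite !ffunE.
case: tpermP => [->|->|hxu hxv]; first by rewrite hi hj2.
  by rewrite hi2 hj.
by have := hall x; rewrite (introN eqP hxu) (introN eqP hxv) /= => /eqP.
Qed.

Lemma letter_P_formula a I J : letter_P q a I J = Pf (letter_perm a) I J.
Proof.
rewrite /letter_P /letter_perm; case: ifP => h0; first by rewrite Pf1.
apply: Pq_at_formula; rewrite val_prev; move/negbT: h0; lia.
Qed.

Lemma letter_permV (a : 'I_k) : (letter_perm a)^-1%g = letter_perm a.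
Proof. by rewrite /letter_perm; case: ifP => _; [rewrite invg1 | rewrite tpermV]. Qed.

Lemma word_P_formula w I J : word_P q w I J = Pf (word_perm w)^-1 I J.
Proof.
elim: w I J => [|a w IH] I J.
  by rewrite /word_P /= /word_perm big_nil invg1 Pf1.
rewrite /word_P /= /op_mul.
have -> : op_prod [seq letter_P q a0 | a0 <- w] = word_P q w by [].
under eq_bigr do rewrite letter_P_formula IH.
rewrite Pf_mul; congr Pf.
by rewrite /word_perm rev_cons big_rcons /= invMg letter_permV.
Qed.

Lemma Pq_perm_formula s I J : Pq_perm q s I J = Pf s^-1 I J.
Proof.
rewrite /Pq_perm; case: pickP => [w /eqP hw | hn]; first by rewrite word_P_formula hw.
by have [w hw] := word_exists s; move: (hn w); rewrite hw eqxx.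
Qed.

Definition Alt (I J : tidx n k) : CC :=
  (k`!%:R)^-1 * \sum_(s : 'S_k) (-1) ^+ s * (I == permt J s)%:R.

Lemma antisym_formula I J : antisym q I J = (Psi I)^-1 * Psi J * Alt I J.
Proof.
rewrite /antisym /Alt; under eq_bigr do rewrite Pq_perm_formula.
rewrite (reindex_inj invg_inj) /=.
under eq_bigr do rewrite invgK odd_permV.
rewrite /Pf; exact: antisym_aux.
Qed.

End PsiSec.


Section OpProd.
Variables (A : algType CC) (n k : nat) (X : 'M[A]_n).

Lemma op_prod_at_seq (s : seq 'I_k) (J I : tidx n k) : uniq s ->
  op_prod [seq op_at X a | a <- s] J I =
  (\prod_(a <- s) X (J a) (I a)) * ([forall b, (b \notin s) ==> (J b == I b)])%:R.
Proof.
elim: s J I => [|x s IH] J I /=.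
  move=> _; rewrite big_nil mul1r /op_id; congr (_%:R); congr (nat_of_bool _).
  by apply/eqP/forallP => [-> b|h] //; apply/ffunP => b; apply/eqP; exact: h.
case/andP=> xs us; rewrite /op_mul.
set K0 : tidx n k := [ffun b => if b == x then I x else J b].
rewrite (@sumD1 A _ K0) /= [X in _ + X](@big0 A) ?addr0; last first.
  move=> K hK; rewrite IH //.
  have [b hb] : exists b, K b != K0 b.
    apply/existsP; rewrite -negb_forall; apply: contra hK => /forallP h.
    by apply/eqP/ffunP => b; apply/eqP; exact: h.
  rewrite /op_at prod_nat_bool.
  move: hb; rewrite ffunE; case: (b =P x) => [-> hb | /eqP hbx hb].
    have -> : [forall b0, (b0 \notin s) ==> (K b0 == I b0)] = false.
      apply/negbTE; rewrite negb_forall; apply/existsP; exists x; by rewrite xs.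
    by rewrite !mulr0.
  have -> : [forall b0, (b0 != x) ==> (J b0 == K b0)] = false.
    apply/negbTE; rewrite negb_forall; apply/existsP; exists b; by rewrite hbx eq_sym.
  by rewrite mulr0 mul0r.
rewrite IH // /op_at prod_nat_bool.
have -> : [forall b, (b != x) ==> (J b == K0 b)].
  by apply/forallP => b; apply/implyP => hb; rewrite ffunE (negbTE hb).
rewrite mulr1 big_cons ffunE eqxx mulrA; congr (_ * _ * _%:R).
  apply: eq_big_seq => c cs; rewrite ffunE; case: eqP => // ec.
  by move: xs; rewrite -ec cs.
congr (nat_of_bool _); apply/idP/idP => /forallP h; apply/forallP => b; have := h b; rewrite in_cons negb_or ffunE.
all: case: (b =P x) => [->|_] /=; rewrite ?eqxx ?implybT //=.
Qed.

Lemma op_prod_at (J I : tidx n k) :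
  op_prod [seq op_at X a | a <- enum 'I_k] J I = \prod_(a < k) X (J a) (I a).
Proof.
rewrite op_prod_at_seq ?enum_uniq //.
have -> : [forall b, (b \notin enum 'I_k) ==> (J b == I b)].
  by apply/forallP => b; rewrite mem_enum.
rewrite mulr1; congr (\big[_/_]_(i <- _) _).
by rewrite enumT [index_enum _]unlock.
Qed.

End OpProd.

Lemma big_split_comm (R : pzSemiRingType) (I : Type) (r : seq I) (f g : I -> R) :
  (forall i j, g i * f j = f j * g i) ->
  \prod_(i <- r) (f i * g i) = \prod_(i <- r) f i * \prod_(i <- r) g i.
Proof.
move=> hc; elim: r => [|a r IH]; first by rewrite !big_nil mulr1.
rewrite !big_cons IH !mulrA; congr (_ * _); rewrite -!mulrA; congr (_ * _).
apply: commr_prod => i _; exact: hc.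
Qed.

Definition Aq n k (q : 'M[CC]_n) (I J : tidx n k) : CC := (Psi q I)^-1 * Psi q J * Alt I J.

Section Main.
Variables (A : algType CC).

Definition Mp n m k (X : 'M[A]_(n, m)) (J : tidx n k) (L : tidx m k) : A :=
  \prod_(a < k) X (J a) (L a).

Definition AM n m k (X : 'M[A]_(n, m)) (q : 'M[CC]_n) (I : tidx n k) (L : tidx m k) : A :=
  \sum_J Aq q I J *: Mp X J L.

Lemma ek_formula n k (q : 'M[CC]_n) (hq : parametric q) (X : 'M[A]_n) :
  ek k q X = \sum_I \sum_J Aq q I J *: \prod_(a < k) X (J a) (I a).
Proof.
rewrite /ek; apply: eq_bigr => I _; apply: eq_bigr => J _.
by rewrite antisym_formula // op_prod_at mulr_algl.
Qed.

Lemma prod_mul n m k (X : 'M[A]_(n, m)) (Y : 'M[A]_(m, n))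
  (hc : forall i j a b, Y i j * X a b = X a b * Y i j) (J I : tidx n k) :
  \prod_(a < k) (X *m Y) (J a) (I a) = \sum_(L : tidx m k) Mp X J L * Mp Y L I.
Proof.
under eq_bigr do rewrite mxE.
rewrite bigA_distr_bigA; apply: eq_bigr => L _.
rewrite big_split_comm //; move=> *; exact: hc.
Qed.

End Main.

Lemma CC_nat_neq0 (j : nat) : (j.+1%:R : CC) != 0.
Proof. have h : (j.+1%:R : (Rdefinitions.R)[i]) != 0 by rewrite Num.Theory.pnatr_eq0. exact: h. Qed.

Lemma CC_eq_opp (a : CC) : a = - a -> a = 0.
Proof.
move=> h; apply/eqP; have : a *+ 2 == 0 by rewrite mulr2n {1}h addNr.
by rewrite -mulr_natr mulf_eq0 (negbTE (CC_nat_neq0 1)) orbF.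
Qed.

Lemma Alt_perm n k (I J : tidx n k) (t : 'S_k) : Alt I (permt J t) = (-1) ^+ t * Alt I J.
Proof.
rewrite /Alt mulrCA; congr (_ * _); rewrite mulr_sumr.
rewrite (reindex_inj (mulIg t^-1)%g) /=; apply: eq_bigr => s _.
rewrite permtM -mulgA mulVg mulg1 odd_permM odd_permV signr_addb.
by rewrite mulrA [_ * (-1) ^+ _]mulrC.
Qed.

Lemma Alt_rep n k (I J : tidx n k) (x y : 'I_k) : x != y -> J x = J y -> Alt I J = 0.
Proof.
move=> xy hJ; apply: CC_eq_opp.
have hp : permt J (tperm x y) = J.
  apply/ffunP => z; rewrite ffunE; case: tpermP => [->|->|] //.
have := Alt_perm I J (tperm x y); rewrite hp odd_tperm xy /= => {1}->.
by rewrite mulN1r.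
Qed.


Lemma inv_par n (q : 'M[CC]_n) (hq : parametric q) i j : (q i j)^-1 = q j i.
Proof.
case: hq => [h0 [h1 _]]; apply: (mulfI (h0 i j)); rewrite mulfV ?h0 ?h1 //.
Qed.

Lemma Psi_swapT n k (q : 'M[CC]_n) (hq : parametric q) (J : tidx n k) (u v : 'I_k) :
  v = u.+1 :> nat -> Psi q (permt J (tperm u v)) = q (J v) (J u) * Psi q J.
Proof.
move=> Huv; rewrite (Psi_swap hq _ Huv) permtM tperm2 permt1 !ffunE tpermL tpermR //.
Qed.

Lemma Psi_swapTV n k (q : 'M[CC]_n) (hq : parametric q) (J : tidx n k) (u v : 'I_k) :
  v = u.+1 :> nat -> (Psi q (permt J (tperm u v)))^-1 = q (J u) (J v) * (Psi q J)^-1.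
Proof.
by move=> Huv; rewrite (Psi_swapT hq _ Huv) invfM inv_par.
Qed.

Lemma prod_ltn (R : pzSemiRingType) m n (F : nat -> R) : (m < n)%N ->
  \prod_(m <= i < n) F i = F m * \prod_(m.+1 <= i < n) F i.
Proof. exact: big_ltn. Qed.

Lemma lin_mid (A : algType CC) (Pr Su x y z : A) (a b e : CC) :
  Pr * (a *: x - b *: y + e *: z) * Su =
  a *: (Pr * x * Su) - b *: (Pr * y * Su) + e *: (Pr * z * Su).
Proof. by rewrite mulrDr mulrBr mulrDl mulrBl -!scalerAr -!scalerAl. Qed.

Lemma group_aux (V : zmodType) (a b d : V) : a + (b - a + d) = b + d.
Proof. by rewrite [b - a]addrC !addrA addrN add0r. Qed.

Lemma group_aux2 (V : zmodType) (a b c d : V) : a - (b - c + d) = a - b + c - d.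
Proof. by rewrite opprD opprB !addrA (addrAC a c). Qed.

Lemma A_eq_opp (A : algType CC) (x : A) : x = - x -> x = 0.
Proof.
move=> h; have h2 : (2%:R : CC) *: x = 0 by rewrite scaler_nat mulr2n {1}h addNr.
by rewrite -[x]scale1r -(mulVf (CC_nat_neq0 1)) -scalerA h2 scaler0.
Qed.

Section ManinK.
Variables (A : algType CC) (n m k : nat) (q : 'M[CC]_n) (p : 'M[CC]_m).
Hypotheses (hq : parametric q) (hp : parametric p).
Variable X : 'M[A]_(n, m).
Hypothesis hX : manin q p X.

Section Adj.
Variables (u v : 'I_k).
Hypothesis Huv : v = u.+1 :> nat.

Definition Pre (J : tidx n k) (L : tidx m k) : A :=
  \prod_(0 <= i < u) X (J (insubd u i)) (L (insubd u i)).
Definition Suf (J : tidx n k) (L : tidx m k) : A :=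
  \prod_(u.+2 <= i < k) X (J (insubd u i)) (L (insubd u i)).

Lemma Mp_split J L : Mp X J L = Pre J L * (X (J u) (L u) * X (J v) (L v)) * Suf J L.
Proof.
rewrite /Mp.
have -> : \prod_(a < k) X (J a) (L a) = \prod_(a < k) X (J (insubd u a)) (L (insubd u a)).
  by apply: eq_bigr => a _; rewrite valKd.
rewrite -(big_mkord xpredT (fun i => X (J (insubd u i)) (L (insubd u i)))).
have uk : (u < k)%N := ltn_ord u.
have u1k : (u.+1 < k)%N by rewrite -Huv ltn_ord.
rewrite (@big_cat_nat _ _ _ u) //=; last exact: ltnW.
rewrite (@prod_ltn A u) // (@prod_ltn A u.+1) //.
have -> : (insubd u u : 'I_k) = u by rewrite valKd.
have -> : (insubd u u.+1 : 'I_k) = v by apply: val_inj; rewrite val_insubd u1k; apply/esym.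
by rewrite !mulrA /Pre /Suf.
Qed.

Lemma outside (i : nat) : (i < u)%N || (u.+2 <= i < k)%N ->
  (insubd u i : 'I_k) != u /\ (insubd u i : 'I_k) != v.
Proof.
move=> hi; rewrite -!val_eqE /= val_insubd.
have -> : (i < k)%N by case/orP: hi => [h|/andP[_ h]] //; apply: ltn_trans h (ltn_ord u).
rewrite Huv; split; apply/eqP; case/orP: hi => [h|/andP[h _]]; lia.
Qed.

Lemma Pre_eq (J J' : tidx n k) (L L' : tidx m k) : (forall i : 'I_k, i != u -> i != v -> J' i = J i /\ L' i = L i) ->
  Pre J' L' = Pre J L /\ Suf J' L' = Suf J L.
Proof.
move=> h; split; apply: eq_big_nat => i hi; have [h1 h2] := outside (i := i) ltac:(lia);
  by have [-> ->] := h _ h1 h2.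
Qed.

Lemma permt_out n' (J : tidx n' k) i : i != u -> i != v -> permt J (tperm u v) i = J i.
Proof. by move=> h1 h2; rewrite ffunE tpermD // eq_sym. Qed.

Definition H (J : tidx n k) (L : tidx m k) : A := (Psi q J * (Psi p L)^-1) *: Mp X J L.

Lemma Z_core (J : tidx n k) (L : tidx m k) : (J u < J v)%N -> (L u < L v)%N ->
  H J (permt L (tperm u v)) + H J L =
  H (permt J (tperm u v)) (permt L (tperm u v)) + H (permt J (tperm u v)) L.
Proof.
move=> hj hl.
have [P1 S1] := @Pre_eq J J L (permt L (tperm u v)) (fun i h1 h2 => conj erefl (permt_out L h1 h2)).
have [P2 S2] := @Pre_eq J (permt J (tperm u v)) L L (fun i h1 h2 => conj (permt_out J h1 h2) erefl).
have [P3 S3] := @Pre_eq J (permt J (tperm u v)) L (permt L (tperm u v))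
   (fun i h1 h2 => conj (permt_out J h1 h2) (permt_out L h1 h2)).
rewrite /H !Mp_split P1 S1 P2 S2 P3 S3 !ffunE tpermL tpermR.
rewrite (Psi_swapT hq J Huv) (Psi_swapTV hp L Huv).
set Pr := Pre J L; set Su := Suf J L.
pose c := Psi q J * (Psi p L)^-1.
have E1 : forall x : A, (Psi q J * (p (L u) (L v) * (Psi p L)^-1)) *: x = c *: (p (L u) (L v) *: x).
  by move=> x; rewrite scalerA; congr (_ *: _); rewrite /c; ring.
have E2 : forall x : A, (q (J v) (J u) * Psi q J * (p (L u) (L v) * (Psi p L)^-1)) *: x =
   c *: ((q (J v) (J u) * p (L u) (L v)) *: x).
  by move=> x; rewrite scalerA; congr (_ *: _); rewrite /c; ring.
have E3 : forall x : A, (q (J v) (J u) * Psi q J * (Psi p L)^-1) *: x = c *: (q (J v) (J u) *: x).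
  by move=> x; rewrite scalerA; congr (_ *: _); rewrite /c; ring.
rewrite E1 E2 E3 -/c -!scalerDr; congr (c *: _).
have h := hX.2 (J u) (J v) (L u) (L v) hj hl.
have e1 : X (J u) (L u) * X (J v) (L v) =
   (q (J v) (J u) * p (L u) (L v)) *: (X (J v) (L v) * X (J u) (L u))
   - p (L u) (L v) *: (X (J u) (L v) * X (J v) (L u))
   + q (J v) (J u) *: (X (J v) (L u) * X (J u) (L v)).
  by apply/eqP; rewrite -subr_eq0 group_aux2 h.
by rewrite e1 lin_mid group_aux.
Qed.

Lemma permt_tt n' (J : tidx n' k) : permt (permt J (tperm u v)) (tperm u v) = J.
Proof. by rewrite permtM tperm2 permt1. Qed.

Lemma permt_fix n' (J : tidx n' k) : J u = J v -> permt J (tperm u v) = J.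
Proof. by move=> h; apply/ffunP => z; rewrite ffunE; case: tpermP => [->|->|]. Qed.

Lemma Z_diag (J : tidx n k) (L : tidx m k) : (J u < J v)%N -> L u = L v ->
  H J L = H (permt J (tperm u v)) L.
Proof.
move=> hj hl.
have [P2 S2] := @Pre_eq J (permt J (tperm u v)) L L (fun i h1 h2 => conj (permt_out J h1 h2) erefl).
rewrite /H !Mp_split P2 S2 !ffunE tpermL tpermR (Psi_swapT hq J Huv) -hl.
rewrite (hX.1 (J u) (J v) (L u) hj) -scalerAr -scalerAl scalerA.
congr (_ *: _); ring.
Qed.

Lemma Z_lt (J : tidx n k) (L : tidx m k) : (J u < J v)%N ->
  H J (permt L (tperm u v)) + H J L =
  H (permt J (tperm u v)) (permt L (tperm u v)) + H (permt J (tperm u v)) L.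
Proof.
move=> hj; case: (ltngtP (L u) (L v)) => hl; first exact: Z_core.
2: move/val_inj: hl => hl.
  have := @Z_core J (permt L (tperm u v)) hj ltac:(by rewrite !ffunE tpermL tpermR).
  by rewrite permt_tt addrC [in RHS]addrC.
by rewrite (permt_fix (J := L)) // -(Z_diag hj hl).
Qed.

Lemma Z_all (J : tidx n k) (L : tidx m k) :
  H J (permt L (tperm u v)) + H J L =
  H (permt J (tperm u v)) (permt L (tperm u v)) + H (permt J (tperm u v)) L.
Proof.
case: (ltngtP (J u) (J v)) => hj; first exact: Z_lt.
  have := @Z_lt (permt J (tperm u v)) L ltac:(by rewrite !ffunE tpermL tpermR).
  by rewrite permt_tt => ->.
by rewrite (permt_fix (J := J)) //; apply: val_inj.
Qed.

Lemma sumAlt_zero (I : tidx n k) (L : tidx m k) :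
  \sum_J Alt I J *: (H J (permt L (tperm u v)) + H J L) = 0.
Proof.
have uv : u != v by rewrite -val_eqE /= Huv; lia.
apply: A_eq_opp.
have inj : injective (fun J : tidx n k => permt J (tperm u v)).
  by apply: (can_inj (g := fun J => permt J (tperm u v))) => J; exact: permt_tt.
rewrite [LHS](reindex_inj inj) /= -sumrN.
apply: eq_bigr => J _; rewrite Alt_perm odd_tperm uv expr1 mulN1r scaleNr.
by rewrite -Z_all.
Qed.

Definition G (I : tidx n k) (L : tidx m k) : A := (Psi p L)^-1 *: AM X q I L.

Lemma G_expand I L : G I L = (Psi q I)^-1 *: \sum_J Alt I J *: H J L.
Proof.
rewrite /G /AM /Aq !scaler_sumr; apply: eq_bigr => J _; rewrite /H !scalerA.
congr (_ *: _); ring.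
Qed.

Lemma G_alt I L : G I (permt L (tperm u v)) = - G I L.
Proof.
rewrite !G_expand -scalerN; congr (_ *: _); apply/eqP; rewrite -addr_eq0 -big_split /=.
by under eq_bigr do rewrite -scalerDr; rewrite sumAlt_zero.
Qed.

End Adj.
Lemma G_perm I L (s : 'S_k) : G I (permt L s) = (-1) ^+ s *: G I L.
Proof.
have [l [_ ->]] := decomp s.
elim: l => [|a l IH]; first by rewrite big_nil permt1 odd_perm1 expr0 scale1r.
rewrite big_cons -permtM odd_permM signr_addb -scalerA -IH.
rewrite /letter_perm; case: ifP => h0.
  by rewrite permt1 odd_perm1 expr0 scale1r.
set u : 'I_k := insubd a a.-1.
have Huv : a = u.+1 :> nat by rewrite val_prev; move/negbT: h0; lia.
have ua : u != a by rewrite -val_eqE /= Huv; lia.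
by rewrite (G_alt Huv) odd_tperm ua expr1 scaleN1r.
Qed.

Lemma fact_neq0 : (k`!%:R : CC) != 0.
Proof. by move: (fact_gt0 k); case: (k`!) => // j _; exact: CC_nat_neq0. Qed.

Lemma manin_k (I : tidx n k) (L : tidx m k) :
  \sum_R Aq p R L *: AM X q I R = AM X q I L.
Proof.
have step1 : forall R, Aq p R L *: AM X q I R = (Psi p L * Alt R L) *: G I R.
  by move=> R; rewrite /G scalerA /Aq; congr (_ *: _); ring.
under eq_bigr do rewrite step1.
have -> : AM X q I L = Psi p L *: G I L by rewrite /G scalerA mulfV ?Psi_neq0 // scale1r.
under eq_bigr do rewrite -scalerA.
rewrite -scaler_sumr; congr (_ *: _).
have inner : forall s : 'S_k, \sum_R ((-1) ^+ s * (R == permt L s)%:R) *: G I R = G I L.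
  move=> s; rewrite (@sumD1 A _ (permt L s)) (@big0 A) ?addr0 => [|R /negbTE ->]; last first.
    by rewrite mulr0 scale0r.
  by rewrite eqxx mulr1 G_perm scalerA -signr_addb addbb expr0 scale1r.
rewrite /Alt.
under eq_bigr do rewrite -scalerA scaler_suml.
rewrite -scaler_sumr exchange_big /=.
under eq_bigr do rewrite inner.
rewrite sumr_const card_Sn.
have -> : G I L *+ k`! = (k`!%:R : CC) *: G I L by rewrite scaler_nat.
by rewrite scalerA mulVf ?fact_neq0 // scale1r.
Qed.

End ManinK.


Section Final.
Variable A : algType CC.

Lemma trace_form n m k (q : 'M[CC]_n) (p : 'M[CC]_m) (hq : parametric q) (hp : parametric p)
  (X : 'M[A]_(n, m)) (Y : 'M[A]_(m, n)) (hX : manin q p X)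
  (hc : forall i j a b, Y i j * X a b = X a b * Y i j) :
  ek k q (X *m Y) = \sum_(I : tidx n k) \sum_(R : tidx m k) AM X q I R * AM Y p R I.
Proof.
rewrite ek_formula //; apply: eq_bigr => I _.
under eq_bigr do rewrite prod_mul // scaler_sumr.
rewrite exchange_big /=.
have e1 : forall L, \sum_J Aq q I J *: (Mp X J L * Mp Y L I) = AM X q I L * Mp Y L I.
  by move=> L; rewrite /AM mulr_suml; apply: eq_bigr => J _; rewrite scalerAl.
under eq_bigr do rewrite e1 -(manin_k hq hp hX I) mulr_suml.
rewrite exchange_big /=; apply: eq_bigr => R _.
rewrite [AM Y p R I]/AM mulr_sumr; apply: eq_bigr => L _.
by rewrite -scalerAl scalerAr.
Qed.

Lemma Aq_zero m k (p : 'M[CC]_m) (R L : tidx m k) : (m < k)%N -> Aq p R L = 0.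
Proof.
move=> mk; rewrite /Aq.
case: (boolP [exists x, exists y, (x != y) && (L x == L y)]).
  case/existsP=> x /existsP [y /andP [xy /eqP hL]].
  by rewrite (Alt_rep R xy hL) mulr0.
move=> hn; exfalso.
have inj : injective L.
  move=> x y hxy; apply/eqP; apply: contraNT hn => xy.
  by apply/existsP; exists x; apply/existsP; exists y; rewrite xy hxy eqxx.
by have := @leq_card _ _ (fun x => L x) inj; rewrite !card_ord; lia.
Qed.

Lemma ek_vanish n m k (q : 'M[CC]_n) (p : 'M[CC]_m) (hq : parametric q) (hp : parametric p)
  (X : 'M[A]_(n, m)) (Y : 'M[A]_(m, n)) (hX : manin q p X)
  (hc : forall i j a b, Y i j * X a b = X a b * Y i j) :
  (m < k)%N -> ek k q (X *m Y) = 0.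
Proof.
move=> mk; rewrite (trace_form k hq hp hX hc) (@big0 A) // => I _.
rewrite (@big0 A) // => R _.
rewrite [AM Y p R I]/AM (@big0 A) ?mulr0 // => L _.
by rewrite Aq_zero // scale0r.
Qed.

Lemma comm_AM n m k (q : 'M[CC]_n) (p : 'M[CC]_m)
  (M : 'M[A]_(n, m)) (N : 'M[A]_(m, n))
  (hc : forall i j a b, N i j * M a b = M a b * N i j) (I : tidx n k) (R : tidx m k) :
  AM N p R I * AM M q I R = AM M q I R * AM N p R I.
Proof.
apply: commr_sum => L _; apply/esym; apply: commr_sum => J _.
rewrite /GRing.comm -scalerAl -scalerAr -scalerAl -scalerAr scalerA [in RHS]scalerA mulrC.
congr (_ *: _); rewrite /Mp.
apply: commr_prod => a _; apply/esym; apply: commr_prod => b _.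
by rewrite /GRing.comm hc.
Qed.

Lemma ek_swap n m k (q : 'M[CC]_n) (p : 'M[CC]_m) (hq : parametric q) (hp : parametric p)
  (M : 'M[A]_(n, m)) (N : 'M[A]_(m, n)) (hM : manin q p M) (hN : manin p q N)
  (hc : forall i j a b, N i j * M a b = M a b * N i j) :
  ek k q (M *m N) = ek k p (N *m M).
Proof.
rewrite (trace_form k hq hp hM hc) (trace_form k hp hq hN (fun i j a b => esym (hc a b i j))).
rewrite exchange_big /=; apply: eq_bigr => R _; apply: eq_bigr => I _.
exact: comm_AM.
Qed.

End Final.

Lemma sum_extend (V : nmodType) a b (F : nat -> V) : (a <= b)%N ->
  (forall i, (a < i)%N -> F i = 0) -> \sum_(i < a.+1) F i = \sum_(i < b.+1) F i.
Proof.
move=> ab h0; rewrite (big_ord_widen b.+1 F) ?ltnS // big_mkcond.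
apply: eq_bigr => i _; case: ifP => // /negbT; rewrite -leqNgt => h.
by rewrite h0.
Qed.

Unset Implicit Arguments.

Theorem mainTheorem18 (A : algType CC) (n m : nat)
    (q : 'M[CC]_n) (p : 'M[CC]_m)
    (M : 'M[A]_(n, m)) (N : 'M[A]_(m, n)) :
  parametric q -> parametric p ->
  manin q p M -> manin p q N ->
  (forall (i : 'I_m) (j : 'I_n) (k : 'I_n) (l : 'I_m), N i j * M k l = M k l * N i j) ->
  'X^m * char_q q (M *m N) = 'X^n * char_q p (N *m M).
Proof.
move=> hq hp hM hN hc.
have hc' : forall i j a b, M i j * N a b = N a b * M i j by move=> i j a b; rewrite hc.
have hE : forall i, e_q q i (M *m N) = e_q p i (N *m M).
  by move=> i; rewrite /e_q; case: eqP => // _; exact: ek_swap.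
have hz1 : forall i, (m < i)%N -> e_q q i (M *m N) = 0.
  move=> i hi; rewrite /e_q; case: eqP => [i0|_]; first by move: hi; rewrite i0.
  by move: (ek_vanish hq hp hM hc hi).
have hz2 : forall i, (n < i)%N -> e_q p i (N *m M) = 0.
  move=> i hi; rewrite /e_q; case: eqP => [i0|_]; first by move: hi; rewrite i0.
  by move: (ek_vanish hp hq hN hc' hi).
pose F (i : nat) := ((-1) ^+ i * e_q q i (M *m N))%:P * 'X^(n + m - i).
have L1 : 'X^m * char_q q (M *m N) = \sum_(i < n.+1) F i.
  rewrite /char_q mulr_sumr; apply: eq_bigr => i _.
  rewrite mulrA -(commr_polyXn _ m) -mulrA -exprD /F; congr (_ * 'X^_).
  by have := ltn_ord i; lia.
have L2 : 'X^n * char_q p (N *m M) = \sum_(i < m.+1) F i.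
  rewrite /char_q mulr_sumr; apply: eq_bigr => i _.
  rewrite mulrA -(commr_polyXn _ n) -mulrA -exprD /F hE; congr (_ * 'X^_).
  by have := ltn_ord i; lia.
rewrite L1 L2 (@sum_extend _ n (n + m)) ?leq_addr //; last first.
  by move=> i hi; rewrite /F hE hz2 // mulr0 polyC0 mul0r.
rewrite (@sum_extend _ m (n + m)) ?leq_addl // => i hi.
by rewrite /F hz1 // mulr0 polyC0 mul0r.
Qed.
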